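(* Let $A,B$ be commutative rings with identity, $f:A\to B$ a ring homomorphism and $J$ an ideal of $B$, regarded as an $A$-module via $f$. Then: (1) for every finitely generated ideal $\mathfrak b$ of $A$, $$\operatorname{Kgrade}_{A\bowtie^f J}(\mathfrak b^e,A\bowtie^f J)=\min\{\operatorname{Kgrade}_A(\mathfrak b,A),\operatorname{Kgrade}_A(\mathfrak b,J)\};$$ (2) for every ideal $\mathfrak a$ of $A$, $$\operatorname{Kgrade}_{A\bowtie^f J}(\mathfrak a^e,A\bowtie^f J)\le\min\{\operatorname{Kgrade}_A(\mathfrak a,A),\operatorname{Kgrade}_A(\mathfrak a,J)\}.$$
   Context: The amalgamation of $A$ with $B$ along $J$ with respect to $f$ is the subring $A\bowtie^fJ=\{(a,f(a)+j): a\in A,\ j\in J\}$ of $A\times B$. Let $\iota_A:A\to A\bowtie^fJ$, $\iota_A(x)=(x,f(x))$; for an ideal $\mathfrak a$ of $A$, $\mathfrak a^e$ denotes the ideal $\iota_A(\mathfrak a)(A\bowtie^fJ)$. Koszul grade: for a ring $R$, an $R$-module $M$ and a finitely generated ideal $\mathfrak b$ of $R$ generated by $x_1,\dots,x_\ell$, $\operatorname{Kgrade}_R(\mathfrak b,M)=\inf\{i\ge 0: H^i(\operatorname{Hom}_R(\mathbb K_\bullet(x_1,\dots,x_\ell),M))\neq 0\}$ (with $\inf\emptyset=\infty$), where $\mathbb K_\bullet$ is the Koszul complex; this is independent of the generators. For an arbitrary ideal $\mathfrak a$ of $R$, $\operatorname{Kgrade}_R(\mathfrak a,M)=\sup\{\operatorname{Kgrade}_R(\mathfrak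 b,M):\mathfrak b\subseteq\mathfrak a$ finitely generated ideal$\}$. *)

(* Defs.v *)
From HB Require Import structures.
From mathcomp Require Import all_boot all_order all_algebra.
From mathcomp Require Import boolp.
Set Implicit Arguments. Unset Strict Implicit. Unset Printing Implicit Defensive.
Import Order.TTheory GRing.Theory.
Local Open Scope ring_scope.

(* ---------- extended naturals N ∪ {∞}: None = ∞ ---------- *)
Definition enat := option nat.
Definition ele (a b : enat) : bool :=
  match b, a with
  | None, _ => true
  | Some n, Some m => (m <= n)%N
  | Some _, None => false
  end.
Definition emin (a b : enat) : enat := if ele a b then a else b.

Lemma esup_ex (S : enat -> Prop) :
  (exists n, forall g, S g -> ele g (Some n)) ->
  exists n : nat, `[< forall g, S g -> ele g (Some n) >].
Proof. by case=> n Hn; exists n; apply/asboolP. Qed.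
Definition esup (S : enat -> Prop) : enat :=
  match pselect (exists n, forall g, S g -> ele g (Some n)) with
  | left H => Some (ex_minn (esup_ex H))
  | right _ => None
  end.

Definition is_ideal (R : comPzRingType) (I : R -> Prop) : Prop :=
  [/\ I 0, (forall u v, I u -> I v -> I (u + v)) & (forall r u, I u -> I (r * u))].

(* Module M over R given as the submodule P of the Z-module V, R acting by act.
   Hom_R(K_i(x), M) is identified with functions from i-subsets of 'I_l to M
   (K_i = exterior power, basis e_S, #|S| = i).  The coboundary is the dual of
   d(e_S) = sum_{j in S} (-1)^{pos(j,S)} x_j e_{S \ j}. *)
Section Koszul.
Variables (R : comPzRingType) (V : zmodType) (act : R -> V -> V) (P : V -> Prop).
Variables (l : nat) (x : 'I_l -> R).

Definition koszul_d (phi : {set 'I_l} -> V) (S : {set 'I_l}) : V :=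
  \sum_(j in S)
     (if odd #|[set k in S | (k < j)%N]| then - act (x j) (phi (S :\ j))
      else act (x j) (phi (S :\ j))).

Definition koszul_cochain (i : nat) (phi : {set 'I_l} -> V) : Prop :=
  (forall S : {set 'I_l}, P (phi S)) /\ (forall S : {set 'I_l}, #|S| != i -> phi S = 0).

Definition koszul_H_nonzero (i : nat) : Prop :=
  exists phi, [/\ koszul_cochain i phi, (forall S, koszul_d phi S = 0) &
    ~ exists psi, (forall S : {set 'I_l}, P (psi S)) /\ (forall S : {set 'I_l}, #|S|.+1 != i -> psi S = 0)
                  /\ (forall S, koszul_d psi S = phi S)].

Lemma Kgrade_ex (H : exists i, koszul_H_nonzero i) :
  exists i, `[< koszul_H_nonzero i >].
Proof. by case: H => i Hi; exists i; apply/asboolP. Qed.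

(* Kgrade_R((x_1..x_l), M) = inf {i | H^i <> 0}, inf of the empty set = ∞ *)
Definition Kgrade : enat :=
  match pselect (exists i, koszul_H_nonzero i) with
  | left H => Some (ex_minn (Kgrade_ex H))
  | right _ => None
  end.
End Koszul.

(* Kgrade of an arbitrary ideal I: sup over finitely generated subideals,
   i.e. over finite families of generators lying in I. *)
Definition KgradeI (R : comPzRingType) (V : zmodType) (act : R -> V -> V)
  (P : V -> Prop) (I : R -> Prop) : enat :=
  esup (fun g => exists (l : nat) (x : 'I_l -> R),
                   (forall i, I (x i)) /\ g = Kgrade act P x).

(* ---------- amalgamation A ⋈^f J as the subring of A × B ---------- *)
Section Amalg.
Variables (A B : comPzRingType) (f : {rmorphism A -> B}) (J : B -> Prop).

Definition amalg (p : (A * B)%type) : Prop := J (p.2 - f p.1).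
Definition iotaA (a : A) : (A * B)%type := (a, f a).
(* extension a^e = iota(a) (A ⋈^f J) *)
Definition ext_ideal (a : A -> Prop) (z : (A * B)%type) : Prop :=
  exists (n : nat) (u : 'I_n -> A) (r : 'I_n -> (A * B)%type),
    [/\ forall k, a (u k), forall k, amalg (r k) & z = \sum_(k < n) iotaA (u k) * r k].
End Amalg.

Definition regular_act (R : comPzRingType) (r v : R) : R := r * v.
Definition via_act (A B : comPzRingType) (f : {rmorphism A -> B}) (a : A) (v : B) : B :=
  f a * v.
Definition fullset_pred (T : Type) (_ : T) : Prop := True.

(* Main.v *)
Require Import Defs.
From HB Require Import structures.
From mathcomp Require Import all_boot all_order all_algebra.
From mathcomp Require Import boolp zify ring.
From Stdlib Require Import Classical.
Set Implicit Arguments. Unset Strict Implicit. Unset Printing Implicit Defensive.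
Import GRing.Theory.
Local Open Scope ring_scope.

Section Sg.
Variable V : zmodType.
Definition sg (n : nat) (v : V) := if odd n then - v else v.
Lemma sgS n v : sg n.+1 v = - sg n v.
Proof. by rewrite /sg /=; case: (odd n); rewrite ?opprK. Qed.
Lemma sgD n m v : sg (n + m) v = sg n (sg m v).
Proof. by rewrite /sg oddD; case: (odd n); case: (odd m); rewrite /= ?opprK. Qed.
Lemma sgK n v : sg n (sg n v) = v.
Proof. by rewrite /sg; case: (odd n); rewrite ?opprK. Qed.
Lemma sg_add n u v : sg n (u + v) = sg n u + sg n v.
Proof. by rewrite /sg; case: (odd n); rewrite ?opprD. Qed.
Lemma sg_opp n v : sg n (- v) = - sg n v.
Proof. by rewrite /sg; case: (odd n). Qed.
Lemma sum_sg n I (r : seq I) (Q : pred I) (F : I -> V) :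
  sg n (\sum_(i <- r | Q i) F i) = \sum_(i <- r | Q i) sg n (F i).
Proof. by rewrite /sg; case: (odd n) => //; rewrite sumrN. Qed.
Lemma sg0 n : sg n 0 = 0.
Proof. by rewrite /sg; case: (odd n); rewrite ?oppr0. Qed.
Lemma sg_eq0 n v : (sg n v = 0) <-> v = 0.
Proof. rewrite /sg; case: (odd n); split=> [|->]; rewrite ?oppr0 //. by move/eqP; rewrite oppr_eq0 => /eqP. Qed.
End Sg.

Definition pos l (S : {set 'I_l}) (j : 'I_l) := #|[set k in S | (k < j)%N]|.

Section Gen.
Variables (R : comPzRingType) (V : zmodType) (act : R -> V -> V).
Hypothesis actD : forall r u v, act r (u + v) = act r u + act r v.

Lemma act0 r : act r 0 = 0.
Proof. by apply: (@addrI _ (act r 0)); rewrite -actD !addr0. Qed.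
Lemma actN r v : act r (- v) = - act r v.
Proof. by apply/eqP; rewrite -subr_eq0 opprK -actD addNr act0. Qed.
Lemma actB r u v : act r (u - v) = act r u - act r v.
Proof. by rewrite actD actN. Qed.
Lemma act_sg r n v : act r (sg n v) = sg n (act r v).
Proof. by rewrite /sg; case: (odd n); rewrite ?actN. Qed.
Lemma act_sum r I (s : seq I) (Q : pred I) (F : I -> V) :
  act r (\sum_(i <- s | Q i) F i) = \sum_(i <- s | Q i) act r (F i).
Proof. by apply: (big_morph (act r)); [apply: actD | apply: act0]. Qed.

Lemma kdE l (x : 'I_l -> R) phi S :
  koszul_d act x phi S = \sum_(j in S) sg (pos S j) (act (x j) (phi (S :\ j))).
Proof. by []. Qed.

Lemma kdB l (x : 'I_l -> R) phi psi S :
  koszul_d act x (fun T => phi T - psi T) S = koszul_d act x phi S - koszul_d act x psi S.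
Proof.
rewrite !kdE -sumrB; apply: eq_bigr => j _.
by rewrite actB sg_add sg_opp.
Qed.
Lemma kdD l (x : 'I_l -> R) phi psi S :
  koszul_d act x (fun T => phi T + psi T) S = koszul_d act x phi S + koszul_d act x psi S.
Proof.
rewrite !kdE -big_split; apply: eq_bigr => j _.
by rewrite actD sg_add.
Qed.
Lemma kdN l (x : 'I_l -> R) phi S :
  koszul_d act x (fun T => - phi T) S = - koszul_d act x phi S.
Proof.
rewrite !kdE -sumrN; apply: eq_bigr => j _.
by rewrite actN sg_opp.
Qed.
Lemma kd0 l (x : 'I_l -> R) S : koszul_d act x (fun _ => 0) S = 0.
Proof. rewrite kdE big1 // => j _; by rewrite act0 sg0. Qed.
Lemma kd_sg l (x : 'I_l -> R) n phi S :
  koszul_d act x (fun T => sg n (phi T)) S = sg n (koszul_d act x phi S).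
Proof. by rewrite /sg; case: (odd n) => //; rewrite kdN. Qed.
Lemma kd_ext l (x : 'I_l -> R) phi psi S : (forall T, phi T = psi T) ->
  koszul_d act x phi S = koszul_d act x psi S.
Proof. by move=> h; rewrite !kdE; apply: eq_bigr => j _; rewrite h. Qed.

Section Lift.
Variables (l : nat) (p : 'I_l.+1).
Local Notation g := (lift p).

Lemma lift_cases (k : 'I_l.+1) : k = p \/ exists j, k = g j.
Proof. by case: (unliftP p k) => [j ->|->]; [right; exists j|left]. Qed.

Lemma lift_lt (i j : 'I_l) : (g i < g j)%N = (i < j)%N.
Proof.
rewrite /= /bump; case: (leqP p i) => hi; case: (leqP p j) => hj /=; lia.
Qed.

Lemma notin_img (T : {set 'I_l}) : p \notin g @: T.
Proof. apply/imsetP => -[j _ /eqP]; by rewrite (negbTE (neq_lift p j)). Qed.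

Lemma img_mem (T : {set 'I_l}) j : (g j \in g @: T) = (j \in T).
Proof. by apply: mem_imset; apply: lift_inj. Qed.

Lemma imgD1 (T : {set 'I_l}) j : g @: (T :\ j) = (g @: T) :\ g j.
Proof.
apply/setP => k; case: (lift_cases k) => [->|[k' ->]].
  by rewrite in_setD1 !(negbTE (notin_img _)) andbF.
by rewrite in_setD1 !img_mem in_setD1 (inj_eq (@lift_inj _ p)).
Qed.

Lemma imgU1D1 (T : {set 'I_l}) j : p |: g @: (T :\ j) = (p |: g @: T) :\ g j.
Proof.
rewrite imgD1; apply/setP => k; rewrite !(in_setU1, in_setD1).
case: (eqVneq k p) => [->|//]; by rewrite neq_lift.
Qed.

Lemma pos_img (T : {set 'I_l}) j : pos (g @: T) (g j) = pos T j.
Proof.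
rewrite /pos -(card_imset _ (@lift_inj _ p)); apply: eq_card => k; case: (lift_cases k) => [->|[k' ->]].
  rewrite inE (negbTE (notin_img _)) /=; apply/esym/negbTE/imsetP => -[j' _ /eqP].
  by rewrite (negbTE (neq_lift p _)).
by rewrite inE img_mem lift_lt img_mem inE.
Qed.

Lemma pos_imgU1 (T : {set 'I_l}) j : pos (p |: g @: T) (g j) = (pos T j + (p <= j))%N.
Proof.
rewrite /pos.
have -> : [set k in p |: g @: T | (k < g j)%N] =
          [set k in [set p] | (k < g j)%N] :|: [set k in g @: T | (k < g j)%N].
  by apply/setP => k; rewrite !inE andb_orl.
rewrite cardsU.
have -> : [set k in [set p] | (k < g j)%N] :&: [set k in g @: T | (k < g j)%N] = set0.
  apply/setP => k; rewrite !inE; case: (eqVneq k p) => //= ->.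
  by rewrite (negbTE (notin_img _)) andbF.
have := pos_img T j; rewrite /pos => ->; rewrite cards0 subn0 addnC; congr (_ + _)%N.
case: (leqP p j) => h.
  have -> : [set k in [set p] | (k < g j)%N] = [set p].
    apply/setP => k; rewrite !inE.
    case: (eqVneq k p) => //= ->; rewrite /= /bump h add1n ltnS; exact: h.
  by rewrite cards1.
have h' : (p <= j)%N = false by rewrite leqNgt h.
have -> : [set k in [set p] | (k < g j)%N] = set0.
  apply/setP => k; rewrite !inE.
  case: (eqVneq k p) => //= ->; rewrite /= /bump h' add0n.
  by apply/negbTE; rewrite -leqNgt ltnW.
by rewrite cards0.
Qed.

Lemma card_img (T : {set 'I_l}) : #|g @: T| = #|T|.
Proof. exact: card_imset (@lift_inj _ p). Qed.
Lemma card_imgU1 (T : {set 'I_l}) : #|p |: g @: T| = #|T|.+1.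
Proof. by rewrite cardsU1 notin_img card_img. Qed.

Lemma pre_img (T : {set 'I_l}) : g @^-1: (g @: T) = T.
Proof. by apply/setP => k; rewrite inE img_mem. Qed.
Lemma pre_imgU1 (T : {set 'I_l}) : g @^-1: (p |: g @: T) = T.
Proof. apply/setP => k; rewrite !inE img_mem; by rewrite eq_sym (negbTE (neq_lift p k)). Qed.
Lemma set_cases (S : {set 'I_l.+1}) :
  S = (if p \in S then p |: g @: (g @^-1: S) else g @: (g @^-1: S)).
Proof.
apply/setP => k; case: (lift_cases k) => [->|[k' ->]].
  by case: ifP => h; rewrite ?in_setU1 ?eqxx ?h // (negbTE (notin_img _)).
by case: ifP => _; rewrite ?in_setU1 img_mem inE // eq_sym (negbTE (neq_lift p k')).
Qed.

Variable x : 'I_l.+1 -> R.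

Lemma kd_img phi (T : {set 'I_l}) :
  koszul_d act x phi (g @: T) = koszul_d act (fun i => x (g i)) (fun U => phi (g @: U)) T.
Proof.
rewrite !kdE big_imset /=; last by move=> i j _ _; apply: lift_inj.
by apply: eq_bigr => j _; rewrite pos_img imgD1.
Qed.

Lemma kd_imgU1 phi (T : {set 'I_l}) :
  koszul_d act x phi (p |: g @: T) =
  sg #|[set t in T | (t < p)%N]| (act (x p) (phi (g @: T))) +
  \sum_(j in T) sg (pos T j + (p <= j))%N (act (x (g j)) (phi (p |: g @: (T :\ j)))).
Proof.
rewrite kdE big_setU1 ?notin_img //=; congr (_ + _).
  rewrite setU1K ?notin_img //; congr sg.
  rewrite /pos -(card_imset _ (@lift_inj _ p)); apply: eq_card => k; case: (lift_cases k) => [->|[k' ->]].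
    rewrite !inE ltnn andbF; apply/esym/negbTE/imsetP => -[j' _ /eqP].
    by rewrite (negbTE (neq_lift p _)).
  rewrite !inE img_mem eq_sym (negbTE (neq_lift p k')) /= img_mem inE.
  congr (_ && _); rewrite /= /bump; case: (leqP p k') => h.
    by rewrite add1n; apply/negbTE; rewrite -leqNgt; apply: leq_trans h _.
  by rewrite add0n.
rewrite big_imset /=; last by move=> i j _ _; apply: lift_inj.
by apply: eq_bigr => j _; rewrite pos_imgU1 imgU1D1.
Qed.
End Lift.

Lemma pos_U1 l (X : {set 'I_l}) k j : k \notin X -> pos (k |: X) j = ((k < j) + pos X j)%N.
Proof.
move=> kX; rewrite /pos.
have -> : [set t in k |: X | (t < j)%N] =
   if (k < j)%N then k |: [set t in X | (t < j)%N] else [set t in X | (t < j)%N].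
  apply/setP => t; case: ifP => h; rewrite !inE; case: (eqVneq t k) => //= ->.
  - by rewrite h.
  - by rewrite h (negbTE kX).
case: ifP => h; last by [].
by rewrite cardsU1 inE (negbTE kX).
Qed.

Lemma pos_self l (X : {set 'I_l}) k : pos (k |: X) k = pos X k.
Proof.
rewrite /pos; apply: eq_card => t; rewrite !inE.
by case: (eqVneq t k) => //= ->; rewrite ltnn andbF.
Qed.

Section Homotopy.
Hypothesis act_comm : forall r s v, act r (act s v) = act s (act r v).
Variables (l : nat) (z c : 'I_l -> R).

Definition khom (phi : {set 'I_l} -> V) (T : {set 'I_l}) : V :=
  \sum_(k | k \notin T) sg (pos T k) (act (c k) (phi (k |: T))).

Lemma khom0 T : khom (fun _ => 0) T = 0.
Proof. by rewrite /khom big1 // => k _; rewrite act0 sg0. Qed.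

Lemma sum_notinD1 (S : {set 'I_l}) j (F : 'I_l -> V) : j \in S ->
  \sum_(k | k \notin S :\ j) F k = F j + \sum_(k | k \notin S) F k.
Proof.
move=> jS; rewrite (bigD1 j) /=; last by rewrite setD11.
congr (_ + _); apply: eq_bigl => k; rewrite in_setD1.
by case: (eqVneq k j) => [->|_] /=; rewrite ?jS ?andbT ?andbF.
Qed.

Lemma homotopy phi S :
  koszul_d act z (khom phi) S + khom (koszul_d act z phi) S =
  \sum_k act (c k) (act (z k) (phi S)).
Proof.
rewrite kdE /khom.
have E1 : \sum_(j in S) sg (pos S j) (act (z j) (\sum_(k | k \notin S :\ j)
            sg (pos (S :\ j) k) (act (c k) (phi (k |: S :\ j))))) =
   \sum_(j in S) act (c j) (act (z j) (phi S)) +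
   \sum_(j in S) \sum_(k | k \notin S)
       sg (pos S j + pos (S :\ j) k) (act (c k) (act (z j) (phi (k |: S :\ j)))).
  rewrite -big_split; apply: eq_bigr => j jS /=.
  rewrite sum_notinD1 // actD sg_add; congr (_ + _).
    have -> : pos (S :\ j) j = pos S j by rewrite -{2}(setD1K jS) pos_self.
    by rewrite act_sg sgK setD1K // act_comm.
  rewrite act_sum sum_sg; apply: eq_bigr => k _.
  by rewrite act_sg sgD act_comm.
have E2 : \sum_(k | k \notin S) sg (pos S k) (act (c k) (\sum_(j in k |: S)
            sg (pos (k |: S) j) (act (z j) (phi ((k |: S) :\ j))))) =
   \sum_(k | k \notin S) act (c k) (act (z k) (phi S)) +
   \sum_(k | k \notin S) \sum_(j in S)
       sg (pos S k + pos (k |: S) j) (act (c k) (act (z j) (phi ((k |: S) :\ j)))).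
  rewrite -big_split; apply: eq_bigr => k kS /=.
  rewrite big_setU1 //= actD sg_add; congr (_ + _).
    by rewrite pos_self setU1K // act_sg sgK.
  rewrite act_sum sum_sg; apply: eq_bigr => j _.
  by rewrite act_sg sgD.
rewrite E1 E2 addrACA [RHS](bigID (fun k => k \in S)) /= -[RHS]addr0; congr (_ + _).
rewrite [X in _ + X]exchange_big /= -big_split big1 // => j jS /=.
rewrite -big_split big1 // => k kS /=.
have kj : k != j by apply/eqP => e; move: kS; rewrite e jS.
have -> : (k |: S) :\ j = k |: (S :\ j).
  apply/setP => t; rewrite !inE; case: (eqVneq t j) => [->|] //=.
  by rewrite eq_sym (negbTE kj).
have h1 : pos S k = ((j < k) + pos (S :\ j) k)%N.
  by rewrite -{1}(setD1K jS) pos_U1 // setD11.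
have h2 : pos (k |: S) j = ((k < j) + pos S j)%N by rewrite pos_U1.
have h3 : ((j < k) + (k < j))%N = 1%N.
  case: (ltngtP j k) => // e; by move: kj; rewrite (val_inj e) eqxx.
have -> : (pos S k + pos (k |: S) j = (pos S j + pos (S :\ j) k).+1)%N by lia.
by rewrite sgS addrN.
Qed.
End Homotopy.

Lemma kd_front l (x : 'I_l.+1 -> R) phi (T : {set 'I_l}) :
  koszul_d act x phi (ord0 |: lift ord0 @: T) =
  act (x ord0) (phi (lift ord0 @: T)) -
  koszul_d act (fun i => x (lift ord0 i)) (fun U => phi (ord0 |: lift ord0 @: U)) T.
Proof.
rewrite kd_imgU1; congr (_ + _).
  have -> : #|[set t in T | (t < @ord0 l)%N]| = 0%N.
    by apply/eqP; rewrite cards_eq0; apply/eqP/setP => t; rewrite !inE ltn0 andbF.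
  by [].
rewrite kdE -sumrN; apply: eq_bigr => j _; by rewrite addn1 sgS.
Qed.

Lemma kd_end l (x : 'I_l.+1 -> R) phi (T : {set 'I_l}) :
  koszul_d act x phi (ord_max |: lift ord_max @: T) =
  sg #|T| (act (x ord_max) (phi (lift ord_max @: T))) +
  koszul_d act (fun i => x (lift ord_max i)) (fun U => phi (ord_max |: lift ord_max @: U)) T.
Proof.
rewrite kd_imgU1; congr (_ + _).
  have -> : [set t in T | (t < @ord_max l)%N] = T.
    by apply/setP => t; rewrite !inE /= ltn_ord andbT.
  by [].
rewrite kdE; apply: eq_bigr => j _.
have -> : (@ord_max l <= j)%N = false by apply/negbTE; rewrite -ltnNge ltn_ord.
by rewrite addn0.
Qed.

Definition glue l (p : 'I_l.+1) (f0 f1 : {set 'I_l} -> V) (S : {set 'I_l.+1}) :=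
  if p \in S then f1 (lift p @^-1: S) else f0 (lift p @^-1: S).
Lemma glue0 l p f0 f1 (T : {set 'I_l}) : glue p f0 f1 (lift p @: T) = f0 T.
Proof. by rewrite /glue (negbTE (notin_img _ _)) pre_img. Qed.
Lemma glue1 l p f0 f1 (T : {set 'I_l}) : glue p f0 f1 (p |: lift p @: T) = f1 T.
Proof. by rewrite /glue setU11 pre_imgU1. Qed.
Lemma glue_ind l (p : 'I_l.+1) (Q : {set 'I_l.+1} -> Prop) :
  (forall T : {set 'I_l}, Q (lift p @: T)) -> (forall T : {set 'I_l}, Q (p |: lift p @: T)) -> forall S, Q S.
Proof. by move=> h0 h1 S; rewrite (set_cases p S); case: ifP. Qed.

Section Grade.
Variable P : V -> Prop.
Hypothesis P0 : P 0.
Hypothesis PB : forall u v, P u -> P v -> P (u - v).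
Lemma PN v : P v -> P (- v). Proof. by move=> h; rewrite -sub0r; apply: PB. Qed.
Lemma PD u v : P u -> P v -> P (u + v).
Proof. by move=> hu hv; rewrite -[v]opprK; apply: PB => //; apply: PN. Qed.
Lemma Psg n v : P v -> P (sg n v). Proof. by rewrite /sg; case: (odd n) => // /PN. Qed.
Lemma Psum I (r : seq I) (Q : pred I) (F : I -> V) :
  (forall i, Q i -> P (F i)) -> P (\sum_(i <- r | Q i) F i).
Proof. by move=> h; apply: big_ind => //; apply: PD. Qed.

Definition cobound l (x : 'I_l -> R) i phi := exists psi,
  (forall S : {set 'I_l}, P (psi S)) /\ (forall S : {set 'I_l}, #|S|.+1 != i -> psi S = 0)
  /\ (forall S, koszul_d act x psi S = phi S).

Definition GG n l (x : 'I_l -> R) := forall i, (i < n)%N -> ~ koszul_H_nonzero act P x i.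

Lemma GG_elim n l (x : 'I_l -> R) i phi : GG n x -> (i < n)%N ->
  koszul_cochain P i phi -> (forall S, koszul_d act x phi S = 0) -> cobound x i phi.
Proof.
move=> hG hi hc hd; apply: NNPP => nb; apply: (hG i hi); exists phi; split => //.
Qed.

Lemma GG_intro n l (x : 'I_l -> R) :
  (forall i phi, (i < n)%N -> koszul_cochain P i phi -> (forall S, koszul_d act x phi S = 0) ->
     cobound x i phi) -> GG n x.
Proof. by move=> h i hi [phi [hc hd nb]]; apply: nb; apply: h. Qed.

Lemma cobound0 l (x : 'I_l -> R) phi : cobound x 0 phi -> forall S, phi S = 0.
Proof.
case=> psi [_ [hs hd]] S; rewrite -hd (kd_ext _ _ (psi := fun _ => 0)) ?kd0 //.
by move=> T; apply: hs.
Qed.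

Lemma GG_front n l (x : 'I_l.+1 -> R) :
  (forall v, P v -> P (act (x ord0) v)) ->
  (forall r s v, act r (act s v) = act s (act r v)) ->
  GG n (fun i => x (lift ord0 i)) -> GG n x.
Proof.
move=> Px comm hG; apply: GG_intro => i phi hi [Pphi sphi] hd.
set z := fun i => x (lift ord0 i).
set w := x ord0.
pose phi0 := fun T : {set 'I_l} => phi (lift ord0 @: T).
pose phi1 := fun T : {set 'I_l} => phi (ord0 |: lift ord0 @: T).
have [psi0 [Ppsi0 [spsi0 dpsi0]]] : cobound z i phi0.
  apply: (GG_elim hG hi).
    split=> [T|T hT]; first exact: Pphi.
    by apply: sphi; rewrite card_img.
  by move=> T; rewrite /phi0 -kd_img hd.
pose chi := fun T : {set 'I_l} => phi1 T - act w (psi0 T).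
have Pchi : forall T : {set 'I_l}, P (chi T) by move=> T; apply: PB; [apply: Pphi | apply: Px].
have schi : forall T : {set 'I_l}, #|T|.+1 != i -> chi T = 0.
  move=> T hT; rewrite /chi spsi0 // act0 subr0; apply: sphi.
  by rewrite card_imgU1.
have dchi : forall T : {set 'I_l}, koszul_d act z chi T = 0.
  move=> T; rewrite kdB.
  have -> : koszul_d act z (fun T => act w (psi0 T)) T = act w (koszul_d act z psi0 T).
    rewrite !kdE act_sum; apply: eq_bigr => j _; by rewrite act_sg comm.
  rewrite dpsi0; apply/eqP; rewrite subr_eq0; apply/eqP.
  by move: (hd (ord0 |: lift ord0 @: T)); rewrite kd_front => /eqP; rewrite subr_eq0 => /eqP <-.
have [rho [Prho [srho drho]]] : exists rho, (forall T : {set 'I_l}, P (rho T)) /\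
    (forall T : {set 'I_l}, #|T|.+2 != i -> rho T = 0) /\ (forall T : {set 'I_l}, koszul_d act z rho T = chi T).
  destruct i as [|i].
    exists (fun _ => 0); split => // ; split => // T.
    by rewrite kd0 schi.
  have := GG_elim (i := i) (phi := chi) hG (ltnW hi).
  case.
  - by split=> // T hT; apply: schi.
  - exact: dchi.
  move=> rho [Prho [srho drho]]; exists rho; split; first exact: Prho.
  split; last exact: drho.
  move=> T hT; apply: srho; exact: hT.
exists (glue ord0 psi0 (fun T => - rho T)); split; last split.
- by apply: (glue_ind (p:=ord0)) => T; rewrite ?glue0 ?glue1; [apply: Ppsi0 | apply: PN; apply: Prho].
- apply: (glue_ind (p:=ord0)) => T; rewrite ?glue0 ?glue1 ?card_img ?card_imgU1 => hT.
    by apply: spsi0.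
  by rewrite srho ?oppr0.
- apply: (glue_ind (p:=ord0)) => T.
    rewrite kd_img -[RHS]/(phi0 T) -dpsi0; apply: kd_ext => U; by rewrite glue0.
  rewrite kd_front glue0 (kd_ext _ _ (psi := fun U => - rho U)); last by move=> U; rewrite glue1.
  rewrite kdN drho opprK /chi; by rewrite addrC subrK.
Qed.

Lemma khom_ext (comm : forall r s v, act r (act s v) = act s (act r v)) l (c : 'I_l -> R) phi psi T :
  (forall U, phi U = psi U) -> khom c phi T = khom c psi T.
Proof. by move=> h; apply: eq_bigr => k _; rewrite h. Qed.

Lemma GG_end n l (x : 'I_l.+1 -> R) (c : 'I_l -> R) :
  (forall k v, P v -> P (act (c k) v)) ->
  (forall r s v, act r (act s v) = act s (act r v)) ->
  (forall v, act (x ord_max) v = \sum_k act (c k) (act (x (lift ord_max k)) v)) ->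
  GG n x -> GG n (fun i => x (lift ord_max i)).
Proof.
move=> Pc comm hw hG; apply: GG_intro => i phi hi [Pphi sphi] hd.
set z := fun i => x (lift ord_max i).
pose chi := fun T : {set 'I_l} => - sg i (khom c phi T).
pose Phi := glue ord_max phi chi.
have [Psi [PPsi [sPsi dPsi]]] : cobound x i Phi.
  apply: (GG_elim hG hi).
    split.
      apply: (glue_ind (p:=ord_max)) => T; rewrite /Phi ?glue0 ?glue1; first exact: Pphi.
      apply: PN; apply: Psg; apply: Psum => k _; apply: Psg; apply: Pc; exact: Pphi.
    apply: (glue_ind (p:=ord_max)) => T; rewrite /Phi ?glue0 ?glue1 ?card_img ?card_imgU1 => hT.
      exact: sphi.
    rewrite /chi /khom big1 ?sg0 ?oppr0 // => k kT.
    by rewrite sphi ?act0 ?sg0 // cardsU1 kT.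
  apply: (glue_ind (p:=ord_max)) => T.
    rewrite kd_img -(hd T); apply: kd_ext => U; by rewrite /Phi glue0.
  rewrite kd_end /Phi glue0 (kd_ext _ _ (psi := chi)); last by move=> U; rewrite glue1.
  rewrite /chi kdN kd_sg.
  have := homotopy comm z c phi T.
  have -> : khom c (koszul_d act z phi) T = 0.
    by rewrite /khom big1 // => k _; rewrite hd act0 sg0.
  rewrite addr0 -hw => ->.
  case: (eqVneq #|T| i) => [->|hT]; first by rewrite subrr.
  by rewrite sphi // act0 !sg0 subrr.
exists (fun T : {set 'I_l} => Psi (lift ord_max @: T)); split; first by move=> T; apply: PPsi.
split; first by move=> T hT; apply: sPsi; rewrite card_img.
by move=> T; rewrite -kd_img dPsi /Phi glue0.
Qed.
End Grade.
End Gen.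

Lemma ele0 (a : enat) : ele (Some 0%N) a.
Proof. by case: a. Qed.

Lemma emin_ge n a b : ele (Some n) (emin a b) <-> ele (Some n) a /\ ele (Some n) b.
Proof.
rewrite /emin; case: a => [a|]; case: b => [b|] //=.
- case: ifP => h /=; split => [h1|[h1 h2]] //=; try split => //=; lia.
- by split => // -[].
- by split => // -[].
Qed.

Lemma ele_ext (X Y : enat) : (forall n, ele (Some n) X -> ele (Some n) Y) -> ele X Y.
Proof.
case: Y => [m|] h; last by case: X h.
case: X h => [k|] h.
  by have := h k (leqnn k).
by have := h m.+1 isT => /=; rewrite ltnn.
Qed.

Lemma ele_anti (X Y : enat) : ele X Y -> ele Y X -> X = Y.
Proof.
case: X => [k|]; case: Y => [m|] //= h1 h2.
by congr Some; apply/eqP; rewrite eqn_leq h1 h2.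
Qed.

Lemma ele_trans (X Y Z : enat) : ele X Y -> ele Y Z -> ele X Z.
Proof.
case: Z => [z|]; case: Y => [y|]; case: X => [x|] //=.
exact: leq_trans.
Qed.

Lemma esup_ge (S : enat -> Prop) n :
  ele (Some n) (esup S) <-> (n = 0%N \/ exists g, S g /\ ele (Some n) g).
Proof.
rewrite /esup; case: pselect => [H|H]; [case: ex_minnP => m /asboolP hm hmin|]; split.
- move=> /= hnm; case: n hnm => [|n] hnm; first by left.
  right; apply: NNPP => hn.
  have : (m <= n)%N.
    apply: hmin; apply/asboolP => g Sg; apply: NNPP => hg; apply: hn; exists g; split => //.
    case: g Sg hg => [g|] //= Sg hg.
    by rewrite ltnNge; apply/negP.
  by move=> h; move: (leq_trans hnm h); rewrite ltnn.
- case=> [->|[g [Sg hg]]]; first by [].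
  exact: ele_trans hg (hm g Sg).
- move=> _; case: n => [|n]; first by left.
  right; apply: NNPP => hn; apply: H; exists n => g Sg.
  apply: NNPP => hg; apply: hn; exists g; split => //.
  case: g Sg hg => [g|] //= Sg hg.
  by rewrite ltnNge; apply/negP.
- by [].
Qed.

Section KG.
Variables (R : comPzRingType) (V : zmodType) (act : R -> V -> V) (P : V -> Prop).

Lemma Kgrade_ge n l (x : 'I_l -> R) : ele (Some n) (Kgrade act P x) <-> GG act P n x.
Proof.
rewrite /Kgrade; case: pselect => [H|H]; last first.
  by split => // _ i _ Hi; apply: H; exists i.
case: ex_minnP => m /asboolP hm hmin /=; split.
- move=> hnm i hi Hi; have := hmin i (introT (asboolP _) Hi).
  by move=> h; move: (leq_trans hi (leq_trans hnm h)); rewrite ltnn.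
- move=> hG; rewrite leqNgt; apply/negP => hmn; exact: hG m hmn hm.
Qed.

Lemma GG_cast n l l' (e : l = l') (x : 'I_l -> R) (x' : 'I_l' -> R) :
  (forall i : 'I_l, x i = x' (cast_ord e i)) -> GG act P n x -> GG act P n x'.
Proof.
case: l' / e x' => x' h.
have -> : x' = x by apply: funext => i; rewrite h cast_ord_id.
by [].
Qed.
End KG.

Section Amalgam.
Variables (A B : comPzRingType) (f : {rmorphism A -> B}) (J : B -> Prop).
Hypothesis hJ : is_ideal J.

Lemma J0 : J 0. Proof. by case: hJ. Qed.
Lemma JD u v : J u -> J v -> J (u + v). Proof. by case: hJ => _ h _; apply: h. Qed.
Lemma JM r u : J u -> J (r * u). Proof. by case: hJ => _ _ h; apply: h. Qed.
Lemma JN u : J u -> J (- u). Proof. by move=> h; rewrite -mulN1r; apply: JM. Qed.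
Lemma JB u v : J u -> J v -> J (u - v). Proof. by move=> hu hv; apply: JD => //; apply: JN. Qed.

Local Notation M := (A * B)%type.
Local Notation amal := (amalg f J).

Lemma amal0 : amal 0. Proof. by rewrite /amalg /= rmorph0 subrr; apply: J0. Qed.
Lemma amal1 : amal 1. Proof. by rewrite /amalg /= rmorph1 subrr; apply: J0. Qed.
Lemma amalB u v : amal u -> amal v -> amal (u - v).
Proof.
rewrite /amalg /= rmorphB => hu hv.
have -> : u.2 - v.2 - (f u.1 - f v.1) = (u.2 - f u.1) - (v.2 - f v.1).
  by rewrite opprB [f v.1 - _]addrC addrACA opprD opprK.
by apply: JB.
Qed.
Lemma amalD u v : amal u -> amal v -> amal (u + v).
Proof.
move=> hu hv; rewrite -[v]opprK; apply: amalB => //.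
by rewrite -sub0r; apply: amalB => //; apply: amal0.
Qed.
Lemma amalM u v : amal u -> amal v -> amal (u * v).
Proof.
rewrite /amalg /= rmorphM => hu hv.
have -> : u.2 * v.2 - f u.1 * f v.1 = u.2 * (v.2 - f v.1) + f v.1 * (u.2 - f u.1).
  by ring.
by apply: JD; apply: JM.
Qed.
Lemma amal_iota a : amal (iotaA f a). Proof. by rewrite /amalg /= subrr; apply: J0. Qed.
Lemma amal_sum I (r : seq I) (Q : pred I) (F : I -> M) :
  (forall i, Q i -> amal (F i)) -> amal (\sum_(i <- r | Q i) F i).
Proof. by move=> h; apply: big_ind => //; [apply: amal0 | apply: amalD]. Qed.

Lemma pairE (u v : M) : u.1 = v.1 -> u.2 = v.2 -> u = v.
Proof. by case: u; case: v => /= ? ? ? ? -> ->. Qed.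

Lemma fst_sum I (r : seq I) (Q : pred I) (F : I -> M) :
  (\sum_(i <- r | Q i) F i).1 = \sum_(i <- r | Q i) (F i).1.
Proof. by apply: (big_morph fst) => //. Qed.
Definition gJ (v : M) : B := v.2 - f v.1.
Lemma gJ_sum I (r : seq I) (Q : pred I) (F : I -> M) :
  gJ (\sum_(i <- r | Q i) F i) = \sum_(i <- r | Q i) gJ (F i).
Proof.
apply: (big_morph gJ); last by rewrite /gJ /= rmorph0 subrr.
by move=> u v; rewrite /gJ /= rmorphD opprD addrACA.
Qed.

Section Split.
Variables (l : nat) (x : 'I_l -> A).
Local Notation xM := (fun i => iotaA f (x i)).

Lemma kdM1 phi S :
  (koszul_d (@regular_act M) xM phi S).1 = koszul_d (@regular_act A) x (fun T => (phi T).1) S.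
Proof.
rewrite !kdE fst_sum; apply: eq_bigr => j _.
by rewrite /sg; case: (odd _).
Qed.

Lemma kdM2 phi S :
  gJ (koszul_d (@regular_act M) xM phi S) = koszul_d (via_act f) x (fun T => gJ (phi T)) S.
Proof.
rewrite !kdE gJ_sum; apply: eq_bigr => j _.
have gN : forall v, gJ (- v) = - gJ v by move=> v; rewrite /gJ /= rmorphN; ring.
have gsg : forall n v, gJ (sg n v) = sg n (gJ v) by move=> n v; rewrite /sg; case: (odd n); rewrite ?gN.
rewrite gsg; congr sg; rewrite /gJ /regular_act /via_act /= rmorphM; ring.
Qed.

Definition emb (a : {set 'I_l} -> A) (b : {set 'I_l} -> B) : {set 'I_l} -> M :=
  fun S => (a S, f (a S) + b S).

Lemma notH_cob (R : comPzRingType) (V : zmodType) (act : R -> V -> V) (P : V -> Prop) (i : nat) (phi : {set 'I_l} -> V) (y : 'I_l -> R) :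
  ~ koszul_H_nonzero act P y i -> koszul_cochain P i phi ->
  (forall S, koszul_d act y phi S = 0) -> cobound act P y i phi.
Proof. move=> nH hc hd; apply: NNPP => nb; apply: nH; exists phi; split => //. Qed.

Lemma split_H i :
  koszul_H_nonzero (@regular_act M) amal xM i <->
  koszul_H_nonzero (@regular_act A) (@fullset_pred A) x i \/ koszul_H_nonzero (via_act f) J x i.
Proof.
split.
- move=> [phi [[Pphi sphi] hd nb]]; apply: NNPP => hn; apply: nb.
  have [psiA [_ [sA dA]]] : cobound (@regular_act A) (@fullset_pred A) x i (fun T => (phi T).1).
    apply: notH_cob; first by move=> h; apply: hn; left.
      by split => // S hS; rewrite sphi.
    by move=> S; rewrite -kdM1 hd.
  have [psiJ [PJ [sJ dJ]]] : cobound (via_act f) J x i (fun T => gJ (phi T)).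
    apply: notH_cob; first by move=> h; apply: hn; right.
      split => S; first exact: Pphi.
      by move=> hS; rewrite sphi // /gJ /= rmorph0 subrr.
    by move=> S; rewrite -kdM2 hd /gJ /= rmorph0 subrr.
  exists (emb psiA psiJ); split; last split.
  + by move=> S; rewrite /amalg /emb /= addrAC subrr add0r; apply: PJ.
  + by move=> S hS; rewrite /emb sA // sJ // rmorph0 addr0.
  + move=> S; have e1 := kdM1 (emb psiA psiJ) S; have e2 := kdM2 (emb psiA psiJ) S.
    have e1' : (koszul_d (@regular_act M) xM (emb psiA psiJ) S).1 = (phi S).1.
      by rewrite e1 -dA.
    apply: pairE => //.
    have : gJ (koszul_d (@regular_act M) xM (emb psiA psiJ) S) = gJ (phi S).
      rewrite e2 -dJ; apply: kd_ext => T; by rewrite /gJ /emb /= addrAC subrr add0r.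
    by rewrite /gJ e1' => /addIr.
- case.
  + move=> [a [[_ sa] hd nb]].
    exists (emb a (fun _ => 0)); split; first split.
    * by move=> S; rewrite /amalg /emb /= addr0 subrr; apply: J0.
    * by move=> S hS; rewrite /emb sa // rmorph0 addr0.
    * move=> S; apply: pairE.
        by rewrite kdM1 /=; rewrite -(hd S); apply: kd_ext.
      have e2 := kdM2 (emb a (fun _ => 0)) S.
      have e1 : (koszul_d (@regular_act M) xM (emb a (fun _ => 0)) S).1 = 0.
        by rewrite kdM1 -(hd S); apply: kd_ext.
      move: e2; rewrite /gJ e1 rmorph0 subr0 => ->.
      rewrite (kd_ext _ _ (psi := fun _ => 0)) ?kd0 //.
        by move=> r u v; rewrite /via_act mulrDr.
      by move=> T; rewrite /emb /= addr0 subrr.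
    * move=> [psi [Ppsi [spsi dpsi]]]; apply: nb.
      exists (fun T => (psi T).1); split => //; split.
        by move=> S hS; rewrite spsi.
      by move=> S; rewrite -kdM1 dpsi.
  + move=> [b [[Pb sb] hd nb]].
    exists (emb (fun _ => 0) b); split; first split.
    * by move=> S; rewrite /amalg /emb /= rmorph0 add0r subr0.
    * by move=> S hS; rewrite /emb sb // rmorph0 addr0.
    * have e1 : forall S, (koszul_d (@regular_act M) xM (emb (fun _ => 0) b) S).1 = 0.
        move=> S; rewrite kdM1 (kd_ext _ _ (psi := fun _ => 0)) ?kd0 //.
        by move=> r u v; rewrite /regular_act mulrDr.
      move=> S; apply: pairE; first by rewrite e1.
      have e2 := kdM2 (emb (fun _ => 0) b) S.
      move: e2; rewrite /gJ e1 rmorph0 subr0 => ->.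
      rewrite (kd_ext _ _ (psi := b)) ?hd // => T; by rewrite /emb /= rmorph0 add0r subr0.
    * move=> [psi [Ppsi [spsi dpsi]]]; apply: nb.
      exists (fun T => gJ (psi T)); split; first by move=> S; apply: Ppsi.
      split; first by move=> S hS; rewrite spsi // /gJ /= rmorph0 subrr.
      move=> S; rewrite -kdM2 dpsi /gJ /emb /=.
      by rewrite rmorph0 add0r subr0.
Qed.
End Split.
End Amalgam.

Section Main.
Variables (A B : comPzRingType) (f : {rmorphism A -> B}) (J : B -> Prop).
Hypothesis hJ : is_ideal J.
Local Notation M := (A * B)%type.
Local Notation amal := (amalg f J).
Local Notation GGM := (GG (@regular_act M) amal).

Lemma GG_split n l (x : 'I_l -> A) :
  GGM n (fun i => iotaA f (x i)) <->
  GG (@regular_act A) (@fullset_pred A) n x /\ GG (via_act f) J n x.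
Proof.
split.
  move=> h; split => i hi Hi; apply: (h i hi); apply: (proj2 (split_H f hJ x i)); [left|right]; exact: Hi.
move=> [h1 h2] i hi Hi; case: (proj1 (split_H f hJ x i) Hi) => H; [exact: h1 i hi H | exact: h2 i hi H].
Qed.

Lemma part1 l (x : 'I_l -> A) :
  Kgrade (@regular_act _) amal (fun i => iotaA f (x i))
  = emin (Kgrade (@regular_act A) (@fullset_pred A) x) (Kgrade (via_act f) J x).
Proof.
have E : forall n, ele (Some n) (Kgrade (@regular_act _) amal (fun i => iotaA f (x i))) <->
   ele (Some n) (emin (Kgrade (@regular_act A) (@fullset_pred A) x) (Kgrade (via_act f) J x)).
  move=> n; rewrite emin_ge !Kgrade_ge; exact: GG_split.
by apply: ele_anti; apply: ele_ext => n /E.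
Qed.

Lemma mA0 : amal 0. Proof. exact: (amal0 f hJ). Qed.
Lemma mA1 : amal 1. Proof. exact: (amal1 f hJ). Qed.
Lemma mAD u v : amal u -> amal v -> amal (u + v). Proof. exact: (amalD hJ). Qed.
Lemma mAM u v : amal u -> amal v -> amal (u * v). Proof. exact: (amalM hJ). Qed.
Lemma mAB u v : amal u -> amal v -> amal (u - v). Proof. exact: (amalB hJ). Qed.
Lemma mAi a : amal (iotaA f a). Proof. exact: (amal_iota f hJ). Qed.

Definition fam (s : seq M) : 'I_(size s) -> M := fun i => nth 0 s i.
Arguments fam s : clear implicits.
Definition inIf (s : seq M) (v : M) :=
  exists c : 'I_(size s) -> M, (forall k, amal (c k)) /\ v = \sum_k c k * fam s k.

Lemma inIf0 s : inIf s 0.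
Proof. exists (fun _ => 0); split => [k|]; first exact: mA0. by rewrite big1 // => k _; rewrite mul0r. Qed.
Lemma inIfD s u v : inIf s u -> inIf s v -> inIf s (u + v).
Proof.
move=> [c [hc ->]] [d [hd ->]]; exists (fun k => c k + d k); split.
  by move=> k; apply: mAD.
by rewrite -big_split; apply: eq_bigr => k _; rewrite mulrDl.
Qed.
Lemma inIfM s r v : amal r -> inIf s v -> inIf s (r * v).
Proof.
move=> hr [c [hc ->]]; exists (fun k => r * c k); split.
  by move=> k; apply: mAM.
by rewrite mulr_sumr; apply: eq_bigr => k _; rewrite mulrA.
Qed.
Lemma inIf_mem s v : v \in s -> inIf s v.
Proof.
move=> vs; have hi : (index v s < size s)%N by rewrite index_mem.
exists (fun k => if k == Ordinal hi then 1 else 0); split.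
  by move=> k; case: ifP => _; [apply: mA1 | apply: mA0].
rewrite (bigD1 (Ordinal hi)) //= eqxx mul1r big1 ?addr0.
  by rewrite /fam /= nth_index.
by move=> k /negbTE ->; rewrite mul0r.
Qed.
Lemma inIf_sub s s' v : {subset s <= s'} -> inIf s v -> inIf s' v.
Proof.
move=> ss [c [hc ->]]; apply: big_ind; [exact: inIf0 | exact: inIfD |].
move=> k _; apply: inIfM => //; apply: inIf_mem; apply: ss; exact: mem_nth.
Qed.


Lemma actD_reg : forall (r u v : M), regular_act r (u + v) = regular_act r u + regular_act r v.
Proof. by move=> r u v; rewrite /regular_act mulrDr. Qed.
Lemma PB_amal : forall u v : M, amal u -> amal v -> amal (u - v).
Proof. exact: mAB. Qed.
Lemma comm_reg : forall (r s v : M), regular_act r (regular_act s v) = regular_act s (regular_act r v).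
Proof. by move=> r s v; rewrite /regular_act mulrCA. Qed.

Lemma chain_front n (s t : seq M) : (forall v, v \in s -> amal v) ->
  GGM n (fam t) -> GGM n (fam (s ++ t)).
Proof.
elim: s => [|a s IH] //= hs ht.
have IH' := IH (fun v vs => hs v (ltac:(by rewrite inE vs orbT))) ht.
have Px : forall v, amal v -> amal (regular_act (fam (a :: s ++ t) ord0) v).
  by move=> v hv; apply: mAM => //; apply: hs; rewrite inE eqxx.
have E : (fun i : 'I_(size (s ++ t)) => fam (a :: s ++ t) (lift ord0 i)) = fam (s ++ t).
  by apply: funext => i; rewrite /fam lift0.
have := GG_front actD_reg mA0 PB_amal Px comm_reg.
by rewrite E => /(_ n IH').
Qed.

Lemma end_step n (u : seq M) w : (forall v, v \in u -> amal v) ->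
  inIf u w -> GGM n (fam (rcons u w)) -> GGM n (fam u).
Proof.
move=> hu [c [hc hw]] hG.
pose x := fun i : 'I_(size u).+1 => nth 0 (rcons u w) i.
have hx : GGM n x.
  apply: (GG_cast (e := size_rcons u w) _ hG) => i.
  by rewrite /fam /x.
have := GG_end actD_reg (mA0) PB_amal (c := c) _ comm_reg _ hx.
have -> : (fun i : 'I_(size u) => x (lift ord_max i)) = fam u.
  apply: funext => i; rewrite /x /fam /= /bump.
  have -> : (size u <= i)%N = false by apply/negbTE; rewrite -ltnNge.
  by rewrite add0n nth_rcons ltn_ord.
apply.
- by move=> k v hv; rewrite /regular_act; apply: mAM.
- move=> v; rewrite /x /= nth_rcons ltnn eqxx hw /regular_act mulr_suml.
  apply: eq_bigr => k _; rewrite mulrA; congr (_ * _ * _).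
  rewrite /fam /= /bump.
  have -> : (size u <= k)%N = false by apply/negbTE; rewrite -ltnNge.
  by rewrite add0n nth_rcons ltn_ord.
Qed.

Lemma chain_end n (s t : seq M) : (forall v, v \in s ++ t -> amal v) ->
  (forall v, v \in t -> inIf s v) -> GGM n (fam (s ++ t)) -> GGM n (fam s).
Proof.
elim/last_ind: t => [|t w IH]; first by rewrite cats0.
move=> hst ht hG.
apply: IH.
- by move=> v hv; apply: hst; rewrite -cats1 catA mem_cat hv.
- by move=> v hv; apply: ht; rewrite -cats1 mem_cat hv.
apply: (end_step (w := w)).
- by move=> v hv; apply: hst; rewrite -cats1 catA mem_cat hv.
- apply: (inIf_sub (s := s)); first by move=> v hv; rewrite mem_cat hv.
  by apply: ht; rewrite mem_rcons inE eqxx.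
by rewrite rcons_cat.
Qed.

Lemma ext_amal (a : A -> Prop) v : ext_ideal f J a v -> amal v.
Proof.
move=> [n [u [r [hu hr ->]]]]; apply: (amal_sum hJ) => // k _.
by apply: mAM => //; apply: mAi.
Qed.

Lemma collect (a : A -> Prop) (Ys : seq M) : (forall v, v \in Ys -> ext_ideal f J a v) ->
  exists U : seq A, (forall u, u \in U -> a u) /\ forall v, v \in Ys -> inIf (map (iotaA f) U) v.
Proof.
elim: Ys => [|w Ys IH] hY; first by exists [::].
have [U [hU hUY]] := IH (fun v hv => hY v (ltac:(by rewrite inE hv orbT))).
have [n [u [r [hu hr hw]]]] := hY w (mem_head _ _).
exists ([seq u k | k <- enum 'I_n] ++ U); split.
  move=> v; rewrite mem_cat => /orP [/mapP [k _ ->]|]; [exact: hu | exact: hU].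
move=> v; rewrite inE => /orP [/eqP ->|hv].
  rewrite hw; apply: big_ind; [exact: inIf0 | exact: inIfD |].
  move=> k _; rewrite mulrC; apply: inIfM => //; apply: inIf_mem.
  by rewrite map_cat mem_cat; apply/orP; left; apply: map_f; apply: map_f; rewrite mem_enum.
apply: (inIf_sub (s := map (iotaA f) U)); last exact: hUY.
by move=> z hz; rewrite map_cat mem_cat hz orbT.
Qed.

Lemma part2 (a : A -> Prop) :
  ele (KgradeI (@regular_act _) amal (ext_ideal f J a))
      (emin (KgradeI (@regular_act A) (@fullset_pred A) a) (KgradeI (via_act f) J a)).
Proof.
apply: ele_ext => n; rewrite emin_ge /KgradeI !esup_ge.
case=> [->|[g [[l [y [hy ->]]] hg]]]; first by split; left.
move/Kgrade_ge: hg => hg.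
pose Y := [seq y i | i <- enum 'I_l].
have eY : l = size Y by rewrite size_map size_enum_ord.
have hY : GGM n (fam Y).
  apply: (GG_cast (e := eY) _ hg) => i.
  rewrite /fam /Y /= (nth_map i) ?size_enum_ord ?ltn_ord //.
  by rewrite nth_ord_enum.
have hYe : forall v, v \in Y -> ext_ideal f J a v.
  by move=> v /mapP [i _ ->]; apply: hy.
have [U [hU hUY]] := collect hYe.
pose Z := map (iotaA f) U.
have hZ : forall v, v \in Z -> amal v by move=> v /mapP [u _ ->]; apply: mAi.
have h1 : GGM n (fam (Z ++ Y)) by apply: chain_front.
have h2 : GGM n (fam Z).
  apply: (chain_end (t := Y)) => //.
  move=> v; rewrite mem_cat => /orP [/hZ //|/hYe]; exact: ext_amal.
have eZ : size Z = size U by rewrite size_map.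
have h3 : GGM n (fun i : 'I_(size U) => iotaA f (nth 0 U i)).
  apply: (GG_cast (e := eZ) _ h2) => i.
  rewrite /fam /Z (nth_map 0) //; by rewrite -eZ ltn_ord.
have [hA hJ'] := proj1 (GG_split n (fun i : 'I_(size U) => nth 0 U i)) h3.
split; right; [exists (Kgrade (@regular_act A) (@fullset_pred A) (fun i : 'I_(size U) => nth 0 U i))
              |exists (Kgrade (via_act f) J (fun i : 'I_(size U) => nth 0 U i))];
  (split; [exists (size U); exists (fun i : 'I_(size U) => nth 0 U i); split => // i; apply: hU; exact: mem_nth
          | by apply/Kgrade_ge]).
Qed.
End Main.

Unset Implicit Arguments.

Theorem lemma3p1 (A B : comPzRingType) (f : {rmorphism A -> B}) (J : B -> Prop)
  (hJ : is_ideal J) :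
  (forall (l : nat) (x : 'I_l -> A),
     Kgrade (@regular_act _) (amalg f J) (fun i => iotaA f (x i))
     = emin (Kgrade (@regular_act A) (@fullset_pred A) x) (Kgrade (via_act f) J x))
  /\
  (forall a : A -> Prop, is_ideal a ->
     ele (KgradeI (@regular_act _) (amalg f J) (ext_ideal f J a))
         (emin (KgradeI (@regular_act A) (@fullset_pred A) a) (KgradeI (via_act f) J a))).
Proof.
split.
- move=> l x; exact: (part1 f hJ x).
- move=> a _; exact: (part2 f hJ a).
Qed.
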